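(* Let $\mathbb G=V_1\times V_2$ be a step-two Carnot group and $f\in\mathcal A_h(\mathbb G)$. For $z\in V_2$ define $f_z:V_1\to\mathbb R$ by $f_z(x):=f(x,z)$. Then $f_z$ is affine (in the usual sense) on $V_1$ for every $z\in V_2$.
   Context: A step-two Carnot group is $\mathbb G=V_1\times V_2$, where $V_1,V_2$ are finite-dimensional real vector spaces with $V_2\neq\{0\}$, equipped with a bilinear skew-symmetric map $[\cdot,\cdot]:V_1\times V_1\to V_2$ with $\operatorname{span}\{[x,x']:x,x'\in V_1\}=V_2$, and group law $(x,z)\cdot(x',z')=(x+x',z+z'+[x,x'])$. $\mathcal A_h(\mathbb G)$ is the space of $h$-affine maps $f:\mathbb G\to\mathbb R$, i.e. such that for all $(x,z)\in\mathbb G$, $y\in V_1$, $t\mapsto f((x,z)\cdot(ty,0))$ is affine. *)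

(* Defs.v *)
From HB Require Import structures.
From mathcomp Require Import all_boot all_order all_algebra.
From mathcomp Require Import reals.
Set Implicit Arguments. Unset Strict Implicit. Unset Printing Implicit Defensive.
Import Order.TTheory GRing.Theory Num.Theory.
Local Open Scope ring_scope.

Definition bilinear_map (R : realType) (V1 V2 : vectType R)
  (br : V1 -> V1 -> V2) : Prop :=
  (forall (a : R) (x y x' : V1), br (a *: x + y) x' = a *: br x x' + br y x') /\
  (forall (a : R) (x x' y' : V1), br x (a *: x' + y') = a *: br x x' + br x y').

Definition skew_map (R : realType) (V1 V2 : vectType R)
  (br : V1 -> V1 -> V2) : Prop := forall x x' : V1, br x x' = - br x' x.

(* span {[x,x'] : x, x' in V1} = V2 : the only subspace containing all
   brackets is the whole space. *)
Definition brackets_span (R : realType) (V1 V2 : vectType R)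
  (br : V1 -> V1 -> V2) : Prop :=
  forall U : {vspace V2}, (forall x x' : V1, br x x' \in U) -> U = fullv.

Definition step_two_carnot (R : realType) (V1 V2 : vectType R)
  (br : V1 -> V1 -> V2) : Prop :=
  [/\ (fullv : {vspace V2}) != 0%VS, bilinear_map br, skew_map br
    & brackets_span br].

Definition carnot_mul (R : realType) (V1 V2 : vectType R)
  (br : V1 -> V1 -> V2) (p q : V1 * V2) : V1 * V2 :=
  (p.1 + q.1, p.2 + q.2 + br p.1 q.1).

Definition affine_R (R : realType) (g : R -> R) : Prop :=
  exists a b : R, forall t : R, g t = a * t + b.

Definition affine_map (R : realType) (V : vectType R) (g : V -> R) : Prop :=
  exists (L : V -> R) (c : R),
    (forall (a : R) (u v : V), L (a *: u + v) = a * L u + L v) /\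
    (forall x : V, g x = L x + c).

Definition h_affine (R : realType) (V1 V2 : vectType R)
  (br : V1 -> V1 -> V2) (f : V1 * V2 -> R) : Prop :=
  forall (p : V1 * V2) (y : V1),
    affine_R (fun t : R => f (carnot_mul br p (t *: y, 0))).

(* Main.v *)
Require Import Defs.
From HB Require Import structures.
From mathcomp Require Import all_boot all_order all_algebra.
From mathcomp Require Import reals.
From mathcomp Require Import ring lra.
Import Order.TTheory GRing.Theory Num.Theory.
Set Implicit Arguments. Unset Strict Implicit. Unset Printing Implicit Defensive.
Local Open Scope ring_scope.

Definition hyp1 (R : realType) (G : R -> R -> R -> R) : Prop :=
  forall a b t u v : R,
    affine_R (fun s => G (a + s * u) (b + s * v) (t + s * (a * v - b * u))).

Lemma affE (R : realType) (phi : R -> R) :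
  affine_R phi -> forall t, phi t = phi 0 + t * (phi 1 - phi 0).
Proof. by move=> [a [b H]] t; rewrite !H; ring. Qed.

Lemma affine_ext (R : realType) (phi psi : R -> R) :
  affine_R phi -> (forall s, psi s = phi s) -> affine_R psi.
Proof. by move=> [a [b H]] E; exists a, b => s; rewrite E H. Qed.

Lemma lineG (R : realType) (G : R -> R -> R -> R) (HG : hyp1 G)
  a b t u v s x1 x2 x3 y1 y2 y3 :
  x1 = a + s * u -> x2 = b + s * v -> x3 = t + s * (a * v - b * u) ->
  y1 = a + u -> y2 = b + v -> y3 = t + (a * v - b * u) ->
  G x1 x2 x3 = G a b t + s * (G y1 y2 y3 - G a b t).
Proof.
move=> -> -> -> -> -> ->; have := affE (HG a b t u v) s => /=.
by rewrite !mul0r !addr0 !mul1r.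
Qed.

Lemma vert0 (R : realType) (G : R -> R -> R -> R) (HG : hyp1 G) t0 t :
  G 0 0 (t0 + t) = G 0 0 t0 + t * (G 0 0 (t0 + 1) - G 0 0 t0).
Proof.
have E : forall t', 2 * G 0 0 (t0 + t') = G (-1) (-t') (t0 + t') + G 1 t' (t0 + t').
  move=> t'.
  have R1 : G (-1) (-t') (t0 + t') = G 0 0 (t0 + t') + (-1) * (G 1 t' (t0 + t') - G 0 0 (t0 + t')).
    by apply: (lineG HG (u := 1) (v := t')); ring.
  rewrite R1; ring.
have A : forall t', G (-1) (-t') (t0 + t') = G (-1) 0 t0 + t' * (G (-1) (-1) (t0 + 1) - G (-1) 0 t0).
  by move=> t'; apply: (lineG HG (u := 0) (v := -1)); ring.
have B : forall t', G 1 t' (t0 + t') = G 1 0 t0 + t' * (G 1 1 (t0 + 1) - G 1 0 t0).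
  by move=> t'; apply: (lineG HG (u := 0) (v := 1)); ring.
have E0 := E 0; have E1 := E 1; have Et := E t.
rewrite oppr0 addr0 in E0.
rewrite A B in Et.
have -> : G 0 0 (t0 + t) = (G (-1) 0 t0 + t * (G (-1) (-1) (t0 + 1) - G (-1) 0 t0) +
   (G 1 0 t0 + t * (G 1 1 (t0 + 1) - G 1 0 t0))) / 2.
  by rewrite -Et; field.
have -> : G 0 0 t0 = (G (-1) 0 t0 + G 1 0 t0) / 2 by rewrite -E0; field.
have -> : G 0 0 (t0 + 1) = (G (-1) (-1) (t0 + 1) + G 1 1 (t0 + 1)) / 2 by rewrite -E1; field.
by field.
Qed.

Lemma vert (R : realType) (G : R -> R -> R -> R) (HG : hyp1 G) al be t0 t :
  G al be (t0 + t) = G al be t0 + t * (G al be (t0 + 1) - G al be t0).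
Proof.
pose G' := fun a b c => G (al + a) (be + b) (c + (al * b - be * a)).
have HG' : hyp1 G'.
  move=> a b c u v.
  apply: (affine_ext (HG (al + a) (be + b) (c + (al * b - be * a)) u v)) => s.
  by rewrite /G'; congr G; ring.
have := vert0 HG' t0 t; rewrite /G' !mulr0 !addr0 subrr !addr0.
done.
Qed.

Lemma Vt (R : realType) (G : R -> R -> R -> R) (HG : hyp1 G) a b t :
  G a b t = G a b 0 + t * (G a b 1 - G a b 0).
Proof. by have := vert HG a b 0 t; rewrite !add0r. Qed.

Lemma h1_main (R : realType) (G : R -> R -> R -> R) (HG : hyp1 G) s :
  G 1 s 0 = G 1 0 0 + s * (G 1 1 0 - G 1 0 0).
Proof.
have L0 : forall s, G 1 s s = G 1 0 0 + s * (G 1 1 1 - G 1 0 0).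
  by move=> s'; apply: (lineG HG (u := 0) (v := 1)); ring.
have L1 : forall s, G 1 s (1 + s) = G 1 0 1 + s * (G 1 1 2 - G 1 0 1).
  by move=> s'; apply: (lineG HG (u := 0) (v := 1)); ring.
have M0 : forall s x2 x3, x2 = 2 * s -> x3 = 4 * s ->
    G 2 x2 x3 = G 2 0 0 + s * (G 2 2 4 - G 2 0 0).
  by move=> s' x2 x3 -> ->; apply: (lineG HG (u := 0) (v := 2)); ring.
have M1 : forall s x2 x3, x2 = 2 * s -> x3 = 1 + 4 * s ->
    G 2 x2 x3 = G 2 0 1 + s * (G 2 2 5 - G 2 0 1).
  by move=> s' x2 x3 -> ->; apply: (lineG HG (u := 0) (v := 2)); ring.
have Rad : forall t s x2, x2 = 2 * s -> G 2 x2 t = G 0 0 t + 2 * (G 1 s t - G 0 0 t).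
  by move=> t s' x2 ->; apply: (lineG HG (u := 1) (v := s')); ring.
have a1 := L0 (-1); have a2 := L1 (-1); rewrite addrN in a2.
have a3 := Vt HG 1 (-1) (-1).
have a4 := Vt HG 1 1 2.
have b1 := M0 (-1) (-2) (-4) ltac:(ring) ltac:(ring).
have b2 := M1 (-1) (-2) (-3) ltac:(ring) ltac:(ring).
have b3 := Vt HG 2 (-2) (-4). have b4 := Vt HG 2 (-2) (-3).
have b5 := Vt HG 2 2 4. have b6 := Vt HG 2 2 5.
have r1 := Rad 0 (-1) (-2) ltac:(ring). have r2 := Rad 1 (-1) (-2) ltac:(ring).
have r3 := Rad 0 0 0 ltac:(ring). have r4 := Rad 1 0 0 ltac:(ring).
have r5 := Rad 0 1 2 ltac:(ring). have r6 := Rad 1 1 2 ltac:(ring).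
have hc1 : (G 1 1 2 - G 1 0 1) - (G 1 1 1 - G 1 0 0) = 0 by lra.
have hk1 : G 1 1 1 - G 1 1 0 = G 1 0 1 - G 1 0 0 by lra.
have hK : G 1 s 1 - G 1 s 0 = (G 1 0 1 - G 1 0 0) + s * ((G 1 1 2 - G 1 0 1) - (G 1 1 1 - G 1 0 0)).
  have v1 := Vt HG 1 s s; have v2 := Vt HG 1 s (1 + s).
  have l0 := L0 s; have l1 := L1 s. lra.
rewrite hc1 mulr0 addr0 in hK.
have v1 := Vt HG 1 s s. rewrite hK L0 in v1.
have -> : G 1 s 0 = G 1 0 0 + s * (G 1 1 1 - G 1 0 0) - s * (G 1 0 1 - G 1 0 0) by lra.
have hh : G 1 1 1 - G 1 0 0 - (G 1 0 1 - G 1 0 0) = G 1 1 0 - G 1 0 0 by lra.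
by rewrite -addrA -mulrBr hh.
Qed.

Section Br.
Variables (R : realType) (V1 V2 : vectType R) (br : V1 -> V1 -> V2).
Hypotheses (Hb : bilinear_map br) (Hs : skew_map br).

Lemma br0l x' : br 0 x' = 0.
Proof.
have := Hb.1 1 0 0 x'; rewrite !scale1r addr0 => /eqP.
by rewrite -{1}[br 0 x']addr0 (inj_eq (addrI _)) eq_sym => /eqP.
Qed.
Lemma brDl x y x' : br (x + y) x' = br x x' + br y x'.
Proof. by have := Hb.1 1 x y x'; rewrite !scale1r. Qed.
Lemma brZl a x x' : br (a *: x) x' = a *: br x x'.
Proof. by have := Hb.1 a x 0 x'; rewrite !addr0 br0l addr0. Qed.
Lemma br0r x : br x 0 = 0.
Proof.
have := Hb.2 1 x 0 0; rewrite !scale1r addr0 => /eqP.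
by rewrite -{1}[br x 0]addr0 (inj_eq (addrI _)) eq_sym => /eqP.
Qed.
Lemma brDr x y x' : br x (y + x') = br x y + br x x'.
Proof. by have := Hb.2 1 x y x'; rewrite !scale1r. Qed.
Lemma brZr a x x' : br x (a *: x') = a *: br x x'.
Proof. by have := Hb.2 a x x' 0; rewrite !addr0 br0r addr0. Qed.
Lemma brxx x : br x x = 0.
Proof.
have := Hs x x => /eqP; rewrite -subr_eq0 opprK -mulr2n -scaler_nat.
rewrite scaler_eq0 pnatr_eq0 /=.
by move/eqP.
Qed.
End Br.

Lemma line_affine (R : realType) (V : vectType R) (g : V -> R) :
  (forall a b : V, affine_R (fun s => g (a + s *: b))) -> affine_map g.
Proof.
move=> H.
have hom : forall (a : R) u, g (a *: u) - g 0 = a * (g u - g 0).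
  move=> a u; have := affE (H 0 u) a => /=.
  rewrite !add0r scale0r scale1r => ->; ring.
have add : forall u v, g (u + v) - g 0 = (g u - g 0) + (g v - g 0).
  move=> u v.
  have m1 := affE (H u (v - u)) (1/2) => /=.
  rewrite scale0r scale1r addr0 (addrC u (v - u)) subrK in m1.
  have m2 := hom (1/2) (u + v).
  have e : u + (1/2) *: (v - u) = (1/2) *: (u + v).
    have hu : u = (1/2 : R) *: u + (1/2 : R) *: u.
      by rewrite -scalerDl (_ : 1/2 + 1/2 = 1 :> R) ?scale1r //; field.
    rewrite {1}hu scalerBr scalerDr.
    by rewrite -addrA [_ + (_ - _)]addrC subrK.
  rewrite e in m1.
  have h2 : (1/2 : R) * (g (u + v) - g 0) = 1/2 * ((g u - g 0) + (g v - g 0)).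
    rewrite -m2 m1; lra.
  lra.
exists (fun v => g v - g 0), (g 0); split; last by move=> x; rewrite subrK.
by move=> a u v; rewrite -[a *: u + v]/(a *: u + v) (_ : g (a *: u + v) - g 0 = (g (a *: u) - g 0) + (g v - g 0)) ?add // hom.
Qed.

Theorem corollary3p8 (R : realType) (V1 V2 : vectType R)
  (br : V1 -> V1 -> V2) (f : V1 * V2 -> R) :
  step_two_carnot br -> h_affine br f ->
  forall z : V2, affine_map (fun x : V1 => f (x, z)).
Proof.
move=> [_ Hb Hs _] Hf z; apply: line_affine => x y.
pose G := fun (al be t : R) => f (al *: x + be *: y, z + t *: br x y).
have HG : hyp1 G.
  move=> al be t u v.
  apply: (affine_ext (Hf (al *: x + be *: y, z + t *: br x y) (u *: x + v *: y))) => s.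
  rewrite /G /carnot_mul /=; congr (f (_, _)).
    rewrite !scalerDl !scalerDr !scalerA.
    by rewrite addrACA.
  rewrite (brZr Hb) (brDl Hb) !(brDr Hb) !(brZl Hb) !(brZr Hb) !(brxx Hs) (Hs y x).
  rewrite !scaler0 !addr0 add0r !scalerN !scalerA -scalerBl scalerA.
  by rewrite -addrA -scalerDl.
exists (G 1 1 0 - G 1 0 0), (G 1 0 0) => s.
have := h1_main HG s; rewrite /G !scale1r !scale0r !addr0 => ->.
by rewrite mulrC addrC.
Qed.
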